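(* Let $X$ be a metric space with an accumulation point. Then: (i) there is a sequence $x\in X^{[\omega]^2}$ with $\Lambda_x(\mathsf{r})\neq\Gamma_x(\mathsf{r})$; (ii) there is a sequence $x\in X^{[\omega]^2}$ such that $\Lambda_x(\mathsf{r})$ is not closed; (iii) if $X$ is locally compact, then for every $x\in X^{[\omega]^2}$ each isolated point of $\Gamma_x(\mathsf{r})$ belongs to $\Lambda_x(\mathsf{r})$. Similarly: (i$'$) there is a sequence $x\in X^{\omega}$ with $\Lambda_x(\mathrm{FS})\neq\Gamma_x(\mathrm{FS})$; (ii$'$) there is a sequence $x\in X^{\omega}$ such that $\Lambda_x(\mathrm{FS})$ is not closed; (iii$'$) if $X$ is locally compact, then for every $x\in X^{\omega}$ each isolated point of $\Gamma_x(\mathrm{FS})$ belongs to $\Lambda_x(\mathrm{FS})$.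
   Context: $\omega$ is the set of nonnegative integers, $[D]^2$ the 2-element subsets of $D$, $[D]^\omega$ the infinite subsets. Let $\mathsf{r}:[\omega]^\omega\to[[\omega]^2]^\omega$, $\mathsf{r}(D)=[D]^2$, and $\mathrm{FS}:[\omega]^\omega\to[\omega]^\omega$, $\mathrm{FS}(D)=\{\sum_{n\in\alpha}n:\alpha\subseteq D\text{ finite nonempty}\}$. For $\rho\in\{\mathsf{r},\mathrm{FS}\}$ with domain $[\omega]^\omega$ and codomain consisting of infinite subsets of $\Psi$ (where $\Psi=[\omega]^2$ for $\mathsf{r}$, $\Psi=\omega$ for $\mathrm{FS}$), and a sequence $x:\Psi\to X$: $\Gamma_x(\rho)$ is the set of $\eta\in X$ such that for every neighborhood $U$ of $\eta$ there is an infinite $F\subseteq\omega$ with $\rho(F)\subseteq\{s\in\Psi:x_s\in U\}$; $\Lambda_x(\rho)$ is the set of $\eta\in X$ for which there is an infinite $F\subseteq\omega$ such that for every neighborhood $U$ of $\eta$ there is a finite $K\subseteq\omega$ with $x_s\in U$ for all $s\in\rho(F\setminus K)$. *)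

(* Defs.v *)
From HB Require Import structures.
From mathcomp Require Import all_boot all_order all_algebra.
From mathcomp Require Import all_classical all_reals all_analysis.
Set Implicit Arguments. Unset Strict Implicit. Unset Printing Implicit Defensive.
Import Order.TTheory GRing.Theory Num.Theory.
Local Open Scope classical_set_scope.

(* [omega]^2 : 2-element subsets {m, n} of nat, represented as ordered pairs
   (m, n) with m < n (a bijective encoding). *)
Definition pair2 := {p : nat * nat | (p.1 < p.2)%N}.

Definition rr (D : set nat) : set pair2 :=
  [set s | D (val s).1 /\ D (val s).2].

Definition FS (D : set nat) : set nat :=
  [set m | exists s : seq nat,
      [/\ uniq s, s != [::], (forall i, i \in s -> D i) & m = (\sum_(i <- s) i)%N]].

Definition Gamma_set {Psi : Type} {X : topologicalType}
    (rho : set nat -> set Psi) (x : Psi -> X) : set X :=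
  [set eta | forall U, nbhs eta U ->
     exists F : set nat, infinite_set F /\ rho F `<=` x @^-1` U].

Definition Lambda_set {Psi : Type} {X : topologicalType}
    (rho : set nat -> set Psi) (x : Psi -> X) : set X :=
  [set eta | exists F : set nat, infinite_set F /\
     forall U, nbhs eta U ->
       exists K : set nat, finite_set K /\ rho (F `\` K) `<=` x @^-1` U].

Definition isolated_point {X : topologicalType} (A : set X) (eta : X) : Prop :=
  A eta /\ exists U, nbhs eta U /\ U `&` A = [set eta].

(* Main.v *)
From Stdlib Require Import PeanoNat.
Require Import Defs.
From HB Require Import structures.
From mathcomp Require Import all_boot all_order all_algebra.
From mathcomp Require Import all_classical all_reals all_analysis.
From mathcomp Require Import finmap.
From mathcomp Require Import lra.
Local Open Scope classical_set_scope.
Set Implicit Arguments. Unset Strict Implicit. Unset Printing Implicit Defensive.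

Lemma finite_bound (K : set nat) : finite_set K -> exists n, forall k, K k -> k < n.
Proof.
move=> /finite_fsetP [X ->]; exists (\max_(i <- X) i).+1 => k /= kX.
by rewrite ltnS (@leq_bigmax_seq _ _ xpredT (fun i => i)).
Qed.

Lemma infiniteP_nat (F : set nat) :
  infinite_set F <-> forall N, exists2 m, N <= m & F m.
Proof.
split.
  move=> Finf N; apply: contrapT => H; apply: Finf.
  apply: (sub_finite_set _ (finite_II N)) => m Fm /=.
  by rewrite ltnNge; apply/negP => Nm; apply: H; exists m.
move=> H /finite_bound [n Hn]; have [m nm Fm] := H n.
by move: (Hn _ Fm); rewrite ltnNge nm.
Qed.

Lemma finite_range_lt (a : nat -> nat) k : finite_set [set a i | i in [set i | i < k]].
Proof. exact/finite_image/finite_II. Qed.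

Definition ufT {T} (p : set (set T)) : Prop :=
  [/\ p setT, (forall A B, p A -> p B -> p (A `&` B)),
      (forall A B, A `<=` B -> p A -> p B), ~ p set0 &
      (forall A, p A \/ p (~` A))].

Lemma uf_nonempty T (p : set (set T)) A : ufT p -> p A -> A !=set0.
Proof.
case=> _ _ pS p0 _ pA; apply: contrapT => H; apply: p0; apply: pS pA.
by move=> t At; apply: H; exists t.
Qed.

Lemma uf_notC T (p : set (set T)) A : ufT p -> p A -> ~ p (~` A).
Proof.
move=> up pA pC; case: (up) => _ pI _ p0 _; apply: p0.
by rewrite -(setICr A); apply: pI.
Qed.

Lemma uf_sub_eq T (p q : set (set T)) : ufT p -> ufT q -> p `<=` q -> p = q.
Proof.
move=> up uq pq; apply/predeqP => A; split; first exact: pq.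
move=> qA; case: (up) => _ _ _ _ /(_ A) [//|pC].
by exfalso; apply: (uf_notC uq qA); apply: pq.
Qed.

Fixpoint bigI {T} (s : seq (set T)) : set T :=
  if s is A :: s' then A `&` bigI s' else setT.
Fixpoint allin {T} (G : set (set T)) (s : seq (set T)) : Prop :=
  if s is A :: s' then G A /\ allin G s' else True.
Definition fip {T} (G : set (set T)) := forall s, allin G s -> bigI s !=set0.

Lemma bigI_cat T (s t : seq (set T)) : bigI (s ++ t) = bigI s `&` bigI t.
Proof. by elim: s => [|A s IH] /=; rewrite ?setTI // IH setIA. Qed.

Lemma allin_cat T (G : set (set T)) s t : allin G s -> allin G t -> allin G (s ++ t).
Proof. by elim: s => [|A s IH] //= [GA Gs] Gt; split => //; apply: IH. Qed.

Lemma allin_sub T (G H : set (set T)) s : G `<=` H -> allin G s -> allin H s.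
Proof. by move=> GH; elim: s => [|A s IH] //= [GA Gs]; split; [apply: GH|apply: IH]. Qed.

Lemma uf_bigI T (p : set (set T)) s : ufT p -> allin p s -> p (bigI s).
Proof.
move=> [pT pI _ _ _]; elim: s => [|A s IH] //= [pA ps].
by apply: pI => //; apply: IH.
Qed.

Lemma uf_ext T (G : set (set T)) : fip G -> exists p, ufT p /\ G `<=` p.
Proof.
move=> fG.
pose F := [set B : set T | exists s, allin G s /\ bigI s `<=` B].
have FF : Filter F.
  constructor.
  - by exists [::].
  - move=> A B [s [Gs sA]] [t [Gt tB]]; exists (s ++ t); split.
      exact: allin_cat.
    by rewrite bigI_cat => x [/sA ? /tB ?].
  - by move=> A B AB [s [Gs sA]]; exists s; split => //; apply: subset_trans AB.
have PF : ProperFilter F.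
  constructor => //; move=> [s [Gs s0]]; have [x sx] := fG _ Gs.
  exact: (s0 x sx).
have [U [UU FU]] := ultraFilterLemma PF.
exists U; split; last first.
  by move=> A GA; apply: FU; exists [:: A]; split => //= x [].
split.
- exact: filterT.
- by move=> A B; apply: filterI.
- by move=> A B; apply: filterS.
- exact: filter_not_empty.
- by move=> A; apply: in_ultra_setVsetC.
Qed.

Definition shift (A : set nat) n : set nat := [set m | A (n + m)].
Definition plus (p q : set (set nat)) : set (set nat) :=
  [set A | p [set n | q (shift A n)]].

Lemma shift_shift A n m : shift (shift A n) m = shift A (n + m).
Proof. by apply/funext => k; rewrite /shift /= addnA. Qed.

Lemma plus_assoc p q r : plus (plus p q) r = plus p (plus q r).
Proof.
apply/funext => A; rewrite /plus /=; congr (p _); apply/funext => m /=.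
by congr (q _); apply/funext => k /=; rewrite shift_shift.
Qed.

Lemma uf_plus p q : ufT p -> ufT q -> ufT (plus p q).
Proof.
move=> [pT pI pS p0 pU] [qT qI qS q0 qU]; split.
- by apply: pS pT => n _; apply: qS qT.
- move=> A B pA pB; apply: pS (pI _ _ pA pB) => n [qA qB].
  by apply: qS (qI _ _ qA qB) => m [].
- move=> A B AB; apply: pS => n; apply: qS => m; exact: AB.
- move=> H; apply: p0; apply: pS H => n /= qn; apply: q0; apply: qS qn => m.
  by [].
- move=> A; case: (pU [set n | q (shift A n)]) => H; [by left|right].
  by apply: pS H => n /= nq; case: (qU (shift A n)).
Qed.

Definition cl (G : set (set nat)) := [set p | ufT p /\ G `<=` p].
Definition semi G :=
  (exists p, cl G p) /\ (forall p q, cl G p -> cl G q -> cl G (plus p q)).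
Definition star (p : set (set nat)) A := [set n | p (shift A n)].

Lemma cl_closed_plus G p : semi G -> cl G p ->
  forall r, cl [set A | forall q, cl G q -> plus q p A] r ->
  exists q, cl G q /\ plus q p = r.
Proof.
move=> [_ sG] [up Gp] r [ur G'r].
pose H := G `|` [set star p A | A in r].
have key : forall s, allin H s -> exists A B, [/\ r A,
    (forall q, cl G q -> q B) & B `&` star p A `<=` bigI s].
  elim=> [|C s IH] /=.
    move=> _; exists setT, setT; split => //; first by case: ur.
    by move=> q [[]].
  move=> [HC /IH [A [B [rA qB sub]]]]; case: HC => [GC|[A0 rA0 <-]].
    exists A, (C `&` B); split => //.
      move=> q cq; have [[_ qI _ _ _] Gq] := cq.
      by apply: qI; [exact: Gq|exact: qB].
    by move=> n [[Cn Bn] An]; split => //; apply: sub.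
  exists (A0 `&` A), B; split => //.
    by case: ur => _ rI _ _ _; apply: rI.
  move=> n [Bn An]; case: up => _ _ pS _ _; split.
    by apply: pS An => m [].
  by apply: sub; split => //; apply: pS An => m [].
have fH : fip H.
  move=> s /key [A [B [rA qB sub]]]; apply: contrapT => ne.
  have : r (~` A).
    apply: G'r => q Gq; have := qB q Gq; case: Gq => [[_ _ qS _ _] _].
    apply: qS => n Bn /=; case: up => _ _ _ _ /(_ (shift A n)) [pA|//].
    by exfalso; apply: ne; exists n; apply: sub.
  exact: uf_notC rA.
have [q [uq Hq]] := uf_ext fH.
exists q; split; first by split => // A GA; apply: Hq; left.
apply: esym; apply: uf_sub_eq => //; first exact: uf_plus.
by move=> A rA; apply: Hq; right; exists A.
Qed.

Lemma idem (G0 : set (set nat)) : semi G0 -> exists p, cl G0 p /\ plus p p = p.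
Proof.
move=> sG0.
pose P := [set H : set (set nat) | semi (G0 `|` H)].
have [H [PH Hmax]] : exists H, P H /\ forall B, H `<` B -> ~ P B.
  apply: Zorn_bigcup => F FP Ftot.
  pose U := \bigcup_(X in F) X.
  have semiH0 : forall H0, (H0 = set0 \/ F H0) -> semi (G0 `|` H0) /\ H0 `<=` U.
    move=> H0 [->|FH0]; first by rewrite setU0; split.
    by split; [apply: FP|move=> A HA; exists H0].
  have key : forall s, allin (G0 `|` U) s ->
      exists H0, (H0 = set0 \/ F H0) /\ allin (G0 `|` H0) s.
    elim=> [|A s IH] /=; first by move=> _; exists set0; split => //; left.
    move=> [GA /IH [H0 [H0F sH0]]]; case: GA => [G0A|[X FX XA]].
      by exists H0; split => //; split => //; left.
    case: H0F => [H00|FH0].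
      exists X; split; first by right.
      split; first by right.
      by apply: allin_sub sH0 => B [|]; [left|rewrite H00].
    case: (Ftot _ _ FX FH0) => [XH0|H0X].
      by exists H0; split; [right|split => //; right; apply: XH0].
    exists X; split; first by right.
    split; first by right.
    by apply: allin_sub sH0 => B [|/H0X]; [left|right].
  split.
    apply: uf_ext => s /key [H0 [H0F sH0]].
    have [[[p cp] _] _] := semiH0 _ H0F.
    apply: (uf_nonempty (p := p)); first by case: cp.
    by apply: uf_bigI; [case: cp|apply: allin_sub sH0; case: cp].
  move=> p q [up Up] [uq Uq]; split; first exact: uf_plus.
  move=> A UA; have /key [H0 [H0F [sH0 _]]] : allin (G0 `|` U) [:: A] by [].
  have [[_ sem] H0U] := semiH0 _ H0F.
  have sub : G0 `|` H0 `<=` G0 `|` U by move=> B [|/H0U]; [left|right].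
  have [_ ] := sem p q (conj up (subset_trans sub Up)) (conj uq (subset_trans sub Uq)).
  by apply.
have Hmax' : forall B, H `<=` B -> P B -> B `<=` H.
  by move=> B HB PB; apply: contrapT => nBH; apply: (Hmax B) => //; split.
pose G := G0 `|` H.
have sG : semi G := PH.
have [[p cp] splus] := sG.
pose G' := [set A | forall q, cl G q -> plus q p A].
have GG' : G `<=` G' by move=> A GA q cq; have [_ ] := splus q p cq cp; apply.
have sG' : semi G'.
  split.
    exists (plus p p); split; first by apply: uf_plus; case: cp.
    by move=> A; apply.
  move=> r1 r2 c1 c2.
  have [q1 [cq1 e1]] := cl_closed_plus sG cp c1.
  have [q2 [cq2 e2]] := cl_closed_plus sG cp c2.
  split; first by apply: uf_plus; [case: c1|case: c2].
  move=> A G'A; rewrite -e1 -e2 -plus_assoc; apply: G'A.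
  by apply: (splus) => //; apply: (splus).
have PG' : P (H `|` G').
  by rewrite /P /= setUA -/G setUidr.
have G'G : G' `<=` G.
  by move=> A G'A; right; apply: (Hmax' _ (@subsetUl _ H G') PG'); right.
have cp' : cl G' p by case: cp => up Gp; split => //; apply: subset_trans Gp.
have [q0 [cq0 e0]] := cl_closed_plus sG cp cp'.
pose Gp := [set star p A | A in p].
have PGp : P (H `|` Gp).
  rewrite /P /= setUA -/G; split.
    exists q0; case: cq0 => uq0 Gq0; split => // A [GA|[B pB <-]]; first exact: Gq0.
    by rewrite /star; have := pB; rewrite -{1}e0.
  move=> q1 q2 [u1 G1] [u2 G2].
  have e : forall q, ufT q -> (G `|` Gp) `<=` q -> plus q p = p.
    move=> q uq Gq; apply: esym; apply: uf_sub_eq; first by case: cp.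
      by apply: uf_plus => //; case: cp.
    by move=> A pA; apply: Gq; right; exists A.
  split; first exact: uf_plus.
  move=> A [GA|[B pB <-]].
    have [_ ] := splus q1 q2 (conj u1 (fun B h => G1 B (or_introl h)))
      (conj u2 (fun B h => G2 B (or_introl h))); by apply.
  change (plus (plus q1 q2) p B).
  by rewrite plus_assoc (e q2 u2 G2) (e q1 u1 G1).
have GpH : Gp `<=` G.
  by move=> A GpA; right; apply: (Hmax' _ (@subsetUl _ H Gp) PGp); right.
exists p; split.
  by case: cp => up Gp'; split => // A GA; apply: Gp'; left.
apply: esym; apply: uf_sub_eq; first by case: cp.
  by apply: uf_plus; case: cp.
move=> A pA; case: cp => _ Gp'; apply: Gp'; apply: GpH; exists A => //.
Qed.

Definition RP {Psi : Type} (rho : set nat -> set Psi) :=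
  forall F0 : set nat, infinite_set F0 -> exists Q : set (set Psi),
   [/\ ufT Q, Q (rho F0) &
    forall B : nat -> set Psi, (forall k, Q (B k)) -> (forall k, B k.+1 `<=` B k) ->
      exists F : set nat, infinite_set F /\
        forall k, exists K : set nat, finite_set K /\ rho (F `\` K) `<=` B k].

Lemma FS_mono A B : A `<=` B -> FS A `<=` FS B.
Proof.
by move=> AB n [s [us s0 sA ->]]; exists s; split => // i /sA; apply: AB.
Qed.

Lemma sum_ge (s : seq nat) e : e \in s -> e <= \sum_(i <- s) i.
Proof. by move=> es; rewrite (big_rem e es) /= leq_addr. Qed.

Lemma FS1 A e : A e -> FS A e.
Proof.
move=> Ae; exists [:: e]; split => //; last by rewrite big_seq1.
by move=> i; rewrite inE => /eqP ->.
Qed.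

Section FSpart.
Variable F0 : set nat.
Hypothesis F0inf : infinite_set F0.
Let D m := F0 `&` [set n | m <= n].
Let T m := FS (D m).

Let T_anti m M : m <= M -> T M `<=` T m.
Proof. by move=> mM; apply: FS_mono => n [F0n Mn]; split => //; apply: leq_trans Mn. Qed.

Let T_ge m n : T m n -> m <= n.
Proof.
move=> [s [us s0 sD ->]]; case: s us s0 sD => // e s _ _ sD.
have [_ me] := sD e (mem_head _ _); apply: leq_trans me _.
by apply: sum_ge; rewrite mem_head.
Qed.

Let T_ne m : T m !=set0.
Proof.
have [e me F0e] := (infiniteP_nat F0).1 F0inf m.
by exists e; apply: FS1.
Qed.

Let T_add m n : T m n -> exists M, m <= M /\ forall k, T M k -> T m (n + k).
Proof.
move=> [s [us s0 sD ->]]; exists (maxn m (\sum_(i <- s) i).+1); split.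
  exact: leq_maxl.
move=> k [t [ut t0 tD ->]]; exists (s ++ t); split.
- rewrite cat_uniq us ut andbT /=; apply/hasPn => e /tD [_ Me].
  apply/negP => es; have := sum_ge es; rewrite leqNgt.
  by rewrite (leq_trans _ Me) // leq_max ltnSn orbT.
- by move: s0; case: (s) => //.
- move=> i; rewrite mem_cat => /orP [/sD //|/tD [F0i Mi]]; split => //.
  by apply: leq_trans Mi; apply: leq_maxl.
- by rewrite big_cat.
Qed.

Let G0 := [set A | exists m, A = T m].

Let semiG0 : semi G0.
Proof.
split.
  apply: uf_ext => s.
  have : allin G0 s -> exists M, T M `<=` bigI s.
    elim: s => [|A s IH] /=; first by move=> _; exists 0.
    move=> [[m ->] /IH [M sub]]; exists (maxn m M) => n Tn; split.
      by apply: (T_anti (leq_maxl m M)).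
    by apply: sub; apply: (T_anti (leq_maxr m M)).
  move=> H /H [M sub]; have [n Tn] := T_ne M; exists n; exact: sub.
move=> p q [up Gp] [uq Gq]; split; first exact: uf_plus.
move=> A [m ->]; have pT : p (T m) by apply: Gp; exists m.
case: up => _ _ pS _ _; apply: pS pT => n /T_add [M [mM sub]].
have qT : q (T M) by apply: Gq; exists M.
by case: uq => _ _ qS _ _; apply: qS qT => k /sub.
Qed.

Lemma RP_FS_aux : exists Q : set (set nat),
   [/\ ufT Q, Q (FS F0) &
    forall B : nat -> set nat, (forall k, Q (B k)) -> (forall k, B k.+1 `<=` B k) ->
      exists F : set nat, infinite_set F /\
        forall k, exists K : set nat, finite_set K /\ FS (F `\` K) `<=` B k].
Proof.
have [p [[up Gp] idp]] := idem semiG0.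
have [pT pI pS p0 pU] := up.
exists p; split => //.
  apply: (pS) (Gp _ (ex_intro _ 0 erefl)); apply: FS_mono => n [] //.
move=> B pB Bdec.
pose st A := A `&` star p A.
have st_in : forall A, p A -> p (st A).
  move=> A pA; apply: (pI) => //; rewrite -idp in pA; exact: pA.
have st_shift : forall A n, st A n -> p (shift (st A) n).
  move=> A n [An pAn]; apply: (pS) (st_in _ pAn) => m [Anm].
  rewrite /star /= shift_shift => h; split => //.
have unb : forall A, p A -> forall N, exists2 n, N <= n & A n.
  move=> A pA N; have pTN : p (T N) by apply: Gp; exists N.
  have [n [An TNn]] := uf_nonempty up (pI _ _ pA pTN).
  by exists n => //; apply: T_ge TNn.
have step : forall cn : set nat * nat, exists a,
    p cn.1 -> st cn.1 a /\ cn.2 <= a.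
  move=> [C N]; have [pC|npC] := pselect (p C); last by exists 0.
  have [a Na [Ca pCa]] := unb _ (st_in _ pC) N.
  by exists a => _; split.
have [f Hf] := choice step.
pose gg := fix gg (n : nat) : set nat * nat :=
  match n with
  | 0 => (B 0, f (B 0, 0))
  | n'.+1 => let C := (gg n').1 in let a := (gg n').2 in
      let C' := st C `&` shift (st C) a `&` B n'.+1 in (C', f (C', a.+1))
  end.
pose C j := (gg j).1; pose a j := (gg j).2; pose E j := st (C j).
have inv : forall j, p (C j) /\ E j (a j).
  elim=> [|j [pC Ea]].
    by split; [apply: pB|have [] := Hf (B 0, 0) (pB 0)].
  have pC' : p (C j.+1).
    apply: (pI); last exact: pB.
    by apply: (pI); [apply: st_in|apply: st_shift].
  by split => //; have [] := Hf (C j.+1, (a j).+1) pC'.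
have a_incr : forall j, a j < a j.+1.
  by move=> j; have [] := Hf (C j.+1, (a j).+1) (inv j.+1).1.
have E_sub : forall j, E j.+1 `<=` E j `&` shift (E j) (a j).
  by move=> j n; rewrite /E /C /= => -[[[Ejn sh] _] _]; split.
have E_B : forall j, E j `<=` B j.
  by case=> [|j] n; rewrite /E /C /= => -[] // [] [].
have E_anti : forall k i, k <= i -> E i `<=` E k.
  move=> k i /subnK <-; elim: (i - k) => [|d IH] //= n.
  by rewrite addSn => /E_sub [/IH].
have a_lt : forall i j, i < j -> a i < a j.
  move=> i j ij; have H := @homo_ltn nat a (fun x y => x < y) _ a_incr.
  by apply: H => //; move=> y x z xy yz; apply: ltn_trans xy yz.
have a_ge : forall i, i <= a i.
  by elim=> [|i IH] //; apply: leq_ltn_trans IH (a_incr i).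
have claim : forall n k (s : seq nat), uniq s -> s != [::] ->
    (forall e, e \in s -> exists2 i, k <= i < k + n & e = a i) ->
    E k (\sum_(i <- s) i).
  elim=> [|n IH] k s us s0 sa.
    case: s s0 us sa => // e s _ _ /(_ e (mem_head _ _)) [i].
    by rewrite addn0 => /andP [ki ik]; move: (leq_ltn_trans ki ik); rewrite ltnn.
  have sa' : forall e, e \in s -> e != a k -> exists2 i, k.+1 <= i < k.+1 + n & e = a i.
    move=> e es eak; have [i /andP [ki ikn] ei] := sa e es.
    exists i => //; rewrite addSnnS ikn andbT ltn_neqAle ki andbT.
    by apply/eqP => ik; move: eak; rewrite ei ik eqxx.
  have [aks|aks] := boolP (a k \in s).
    rewrite (big_rem _ aks) /=.
    have [r0|r0] := eqVneq (rem (a k) s) [::].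
      by rewrite r0 big_nil addn0; exact: (inv k).2.
    have := IH k.+1 (rem (a k) s) (rem_uniq _ us) r0.
    move=> /(_ _) H; have : E k.+1 (\sum_(i <- rem (a k) s) i).
      apply: H => e; rewrite (mem_rem_uniq _ us) => /andP [eak es]; exact: sa'.
    by move=> /E_sub [_].
  apply: (E_anti k k.+1) => //; apply: IH => // e es; apply: sa' => //.
  by apply: contraNneq aks => <-.
exists (range a); split.
  by apply/infiniteP_nat => N; exists (a N) => //; exists N.
move=> k; exists [set a i | i in [set i | i < k]]; split; first exact: finite_range_lt.
move=> m [s [us s0 sF ->]]; apply: E_B; apply: (claim (\sum_(i <- s) i).+1) => //.
move=> e es; have [[i _ ei] nK] := sF e es; exists i => //.
apply/andP; split.
  by rewrite leqNgt; apply/negP => ik; apply: nK; exists i.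
by rewrite ltn_addl // ltnS (leq_trans (a_ge i)) // ei sum_ge.
Qed.
End FSpart.

Lemma RP_FS : RP FS.
Proof. by move=> F0 F0inf; apply: RP_FS_aux. Qed.

Lemma anti_seq {T} (B : nat -> set T) : (forall k, B k.+1 `<=` B k) ->
  forall k i, k <= i -> B i `<=` B k.
Proof.
move=> Bdec k i /subnK <-; elim: (i - k) => [|d IH] //= n.
by rewrite addSn => /Bdec /IH.
Qed.

Lemma incr_facts (h : nat -> nat) : (forall j, h j < h j.+1) ->
  (forall i j, i < j -> h i < h j) /\ (forall i, i <= h i).
Proof.
move=> hi; split.
  move=> i j ij; have H := @homo_ltn nat h (fun x y => x < y) _ hi.
  by apply: H => //; move=> y x z xy yz; apply: ltn_trans xy yz.
by elim=> [|i IH] //; apply: leq_ltn_trans IH (hi i).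
Qed.

Lemma nonprincipal_uf (F0 : set nat) : infinite_set F0 ->
  exists p, [/\ ufT p, p F0 & forall N, p [set n | N <= n]].
Proof.
move=> F0inf.
pose G := [set A : set nat | A = F0 \/ exists N, A = [set n | N <= n]].
have fG : fip G.
  move=> s; have : allin G s -> exists N, F0 `&` [set n | N <= n] `<=` bigI s.
    elim: s => [|A s IH] /=; first by move=> _; exists 0.
    move=> [GA /IH [N sub]]; case: GA => [->|[M ->]].
      by exists N => n [F0n Nn]; split => //; apply: sub.
    exists (maxn M N) => n [F0n Nn]; split.
      by apply: leq_trans Nn; apply: leq_maxl.
    by apply: sub; split => //; apply: leq_trans Nn; apply: leq_maxr.
  move=> H /H [N sub]; have [e Ne F0e] := (infiniteP_nat F0).1 F0inf N.
  by exists e; apply: sub.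
have [p [up Gp]] := uf_ext fG.
by exists p; split => //; [apply: Gp; left|move=> N; apply: Gp; right; exists N].
Qed.

Lemma RP_rr : RP rr.
Proof.
move=> F0 F0inf.
have [p [up pF0 pN]] := nonprincipal_uf F0inf.
have [pT pI pS p0 pU] := up.
pose sec (A : set pair2) m : set nat :=
  [set n | forall h : m < n, A (exist (fun q : nat * nat => q.1 < q.2) (m, n) h)].
exists [set A | p [set m | p (sec A m)]]; split.
- split.
  + by apply: (pS) (pT) => m _; apply: (pS) (pT).
  + move=> A B pA pB; apply: (pS) (pI _ _ pA pB) => m [qA qB].
    by apply: (pS) (pI _ _ qA qB) => n [hA hB] h; split; [apply: hA|apply: hB].
  + move=> A B AB; apply: (pS) => m; apply: (pS) => n H h; apply: AB; exact: H.
  + move=> H; apply: (p0); apply: (pS) H => m /= pm; apply: (p0).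
    apply: (pS) (pI _ _ pm (pN m.+1)) => n [H /= mn]; exact: (H mn).
  + move=> A; case: (pU [set m | p (sec A m)]) => H; [by left|right].
    apply: (pS) H => m /= npm; case: (pU (sec A m)) => // H'.
    apply: (pS) (pI _ _ H' (pN m.+1)) => n [nA mn] h nA'; apply: nA => h'.
    by rewrite (bool_irrelevance h' h).
- by apply: (pS) (pF0) => m F0m; apply: (pS) (pF0) => n F0n h; split.
move=> B pB Bdec.
pose M k := [set m | p (sec (B k) m)].
have step : forall tn : set nat * nat * nat, exists h,
    p tn.1.1 -> [/\ tn.1.1 h, M tn.2 h & tn.1.2 <= h].
  move=> [[T N] j] /=; have [pT'|npT] := pselect (p T); last by exists 0.
  have := pI _ _ (pI _ _ pT' (pB j)) (pN N).
  move=> /(uf_nonempty up) [h [[Th Mh] Nh]].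
  by exists h.
have [f Hf] := choice step.
pose gg := fix gg (n : nat) : set nat * nat :=
  match n with
  | 0 => (setT, f (setT, 0, 0))
  | n'.+1 => let T := (gg n').1 in let h := (gg n').2 in
      let T' := T `&` sec (B n') h in (T', f (T', h.+1, n'.+1))
  end.
pose T j := (gg j).1; pose h j := (gg j).2.
have inv : forall j, p (T j) /\ [/\ T j (h j), M j (h j) & True].
  elim=> [|j [pTj [Th Mh _]]].
    by have [] := Hf (setT, 0, 0) pT.
  have pT' : p (T j.+1) by apply: pI.
  by split => //; have [] := Hf (T j.+1, (h j).+1, j.+1) pT'.
have h_incr : forall j, h j < h j.+1.
  by move=> j; have [] := Hf (T j.+1, (h j).+1, j.+1) (inv j.+1).1.
have [h_lt h_ge] := incr_facts h_incr.
have T_anti := anti_seq (fun k n (H : T k.+1 n) => H.1).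
have Bij : forall i j, i < j -> sec (B i) (h i) (h j).
  move=> i j ij; have : T i.+1 (h j).
    by apply: (T_anti i.+1 j ij); case: (inv j) => _ [].
  by case.
exists (range h); split.
  by apply/infiniteP_nat => N; exists (h N) => //; exists N.
move=> k; exists [set h i | i in [set i | i < k]]; split; first exact: finite_range_lt.
move=> [[m n] /= mn] [[[i _ him] nKi] [[j _ hjn] nKj]]; simpl in him, hjn; subst m n.
have ki : k <= i by rewrite leqNgt; apply/negP => ik; apply: nKi; exists i.
have ij : i < j.
  rewrite ltnNge; apply/negP => ji; have := mn.
  move: ji; rewrite leq_eqVlt => /orP [/eqP ->|/h_lt]; first by rewrite ltnn.
  by move=> H1 H2; move: (ltn_trans H1 H2); rewrite ltnn.
apply: (anti_seq Bdec ki).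
exact: Bij ij mn.
Qed.

Lemma Lambda_sub_Gamma {Psi : Type} {X : topologicalType} (rho : set nat -> set Psi)
  (x : Psi -> X) : Lambda_set rho x `<=` Gamma_set rho x.
Proof.
move=> eta [F [Finf H]] U nU; have [K [fK sub]] := H U nU.
by exists (F `\` K); split => //; exact: infinite_setD.
Qed.

Section Generic.
Import Order.TTheory Num.Theory GRing.Theory.
Local Open Scope ring_scope.

Lemma small_inv (R : realType) (e : R) : 0 < e -> exists k : nat, k.+1%:R^-1 < e.
Proof.
move=> e0; exists (Num.Def.truncn e^-1).
rewrite invf_plt ?posrE ?ltr0n //; exact: truncnS_gt.
Qed.

Lemma iso_Lambda {Psi : Type} (R : realType) (X : metricType R)
  (rho : set nat -> set Psi) : RP rho -> locally_compact [set: X] ->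
  forall (x : Psi -> X) (eta : X),
    isolated_point (Gamma_set rho x) eta -> Lambda_set rho x eta.
Proof.
move=> Hrp lc x eta [Geta [U [nU UG]]].
have [C' nC' [cC' _]] := lc eta I.
have nC : nbhs eta C'.
  by move: nC'; rewrite /within /=; apply: filterS => y; apply.
have [r r0 sub] := (nbhs_ballP _ _).1 (filterI nU nC).
have r20 : 0 < r / 2 by rewrite divr_gt0.
pose W := ball eta (r / 2).
have nW : nbhs eta W := nbhsx_ballx _ _ r20.
have WU : W `<=` U `&` C'.
  by move=> z Wz; apply: sub; apply: le_ball Wz; lra.
have [F0 [F0inf F0W]] := Geta W nW.
have [Q [uQ QF0 Qprop]] := Hrp F0 F0inf.
have [QT QI QS Q0 QU] := uQ.
have QW : Q (x @^-1` W) := QS _ _ F0W QF0.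
pose Fx := [set V : set X | Q (x @^-1` V)].
have PFx : ProperFilter Fx.
  constructor; first by apply: Q0.
  constructor.
  - exact: QT.
  - by move=> A B; apply: QI.
  - by move=> A B AB; apply: QS => t; apply: AB.
have FxC : Fx C' by apply: QS QW => t /WU [].
have [y [C'y clY]] := cC' Fx PFx FxC.
have Qball : forall e, 0 < e -> Q (x @^-1` ball y e).
  move=> e e0; case: (QU (x @^-1` ball y e)) => // H.
  have [z [nz bz]] := clY (~` ball y e) (ball y e) H (nbhsx_ballx y e e0).
  by exfalso; apply: nz.
pose B k := x @^-1` ball y (k.+1%:R^-1).
have Bdec : forall k, B k.+1 `<=` B k.
  move=> k t; apply: le_ball.
  by rewrite lef_pV2 ?posrE ?ltr0n // ler_nat.
have QB : forall k, Q (B k) by move=> k; apply: Qball; rewrite invr_gt0 ltr0n.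
have [F [Finf HF]] := Qprop B QB Bdec.
have Ly : Lambda_set rho x y.
  exists F; split => // V nV; have [e e0 bV] := (nbhs_ballP _ _).1 nV.
  have [k ke] := small_inv e0; have [K [fK sK]] := HF k.
  exists K; split => // s /sK Bs; apply: bV; apply: le_ball Bs; exact: ltW.
have Gy := Lambda_sub_Gamma Ly.
have Uy : U y.
  have [z [Wz bz]] := clY W (ball y (r / 2)) QW (nbhsx_ballx _ _ r20).
  have := ball_split Wz (ball_sym bz).
  by move=> /sub [].
have : (U `&` Gamma_set rho x) y by split.
by rewrite UG => <-.
Qed.
End Generic.

Section Seq.
Import Order.TTheory Num.Theory GRing.Theory.
Local Open Scope ring_scope.
Variables (R : realType) (X : metricType R) (eta : X).
Hypothesis hacc : limit_point [set: X] eta.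

Lemma seq_exists : exists y : nat -> X,
  [/\ (forall U, nbhs eta U -> exists N, forall j, (N <= j)%N -> U (y j)) &
      (forall k, exists V, nbhs eta V /\ forall j, V (y j) -> (k < j)%N)].
Proof.
have hpt : forall r : R, exists z : X, 0 < r -> z != eta /\ ball eta r z.
  move=> r; have [r0|r0] := ltP 0 r; last first.
    by exists eta.
  have [z [zeta _ bz]] := hacc (nbhsx_ballx eta r r0).
  by exists z.
have [pt Hpt] := choice hpt.
pose rad := fix rad (k : nat) : R :=
  match k with 0 => 1 | k'.+1 => Num.min (mdist eta (pt (rad k'))) (k'.+2%:R^-1) end.
pose y k := pt (rad k).
have rad_pos : forall k, 0 < rad k /\ (y k != eta /\ mdist eta (y k) < rad k).
  elim=> [|k [r0 [ye dy]]].
    by have [ye by0] := Hpt 1 ltr01; rewrite ballEmdist in by0; split.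
  have r1 : 0 < rad k.+1.
    rewrite /= lt_min invr_gt0 ltr0n andbT mdist_gt0 eq_sym; exact: ye.
  by have [ye' by'] := Hpt _ r1; rewrite ballEmdist in by'; split.
have rad_S : forall k, rad k.+1 <= mdist eta (y k).
  by move=> k; rewrite /= ge_min lexx.
have rad_dec : forall k, rad k.+1 <= rad k.
  move=> k; apply: le_trans (rad_S k) _; apply: ltW; exact: (rad_pos k).2.2.
have rad_anti : forall j k, (j <= k)%N -> rad k <= rad j.
  move=> j k /subnK <-; elim: (k - j)%N => [|d IH]; first by rewrite add0n.
  by rewrite addSn; apply: le_trans (rad_dec _) IH.
have rad_inv : forall k, rad k <= k.+1%:R^-1.
  by case=> [|k] /=; [rewrite invr1|rewrite ge_min lexx orbT].
exists y; split.
  move=> U nU; have [e e0 sub] := (nbhs_ballP _ _).1 nU.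
  have [N Ne] := small_inv e0; exists N => j Nj; apply: sub.
  rewrite ballEmdist /=; apply: lt_le_trans (rad_pos j).2.2 _.
  apply: le_trans (rad_anti _ _ Nj) _; apply: le_trans (rad_inv N) _; exact: ltW.
move=> k; exists (ball eta (rad k.+1)); split.
  by apply: nbhsx_ballx; exact: (rad_pos k.+1).1.
move=> j; rewrite ballEmdist /= => dj; rewrite ltnNge; apply/negP => jk.
have : rad k.+1 <= mdist eta (y j).
  by apply: le_trans (rad_anti j.+1 k.+1 jk) (rad_S j).
by rewrite leNgt dj.
Qed.
End Seq.

Definition blk (i : nat) := logn 2 i.+1.

Lemma blk_inf k N : exists2 i, N <= i & blk i = k.
Proof.
have pos : 0 < 2 ^ k * N.*2.+1 by rewrite muln_gt0 expn_gt0.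
exists (2 ^ k * N.*2.+1).-1.
  rewrite -ltnS prednK //; apply: leq_trans (leq_pmull _ (expn_gt0 2 k)).
  by rewrite ltnS -addnn leq_addr.
rewrite /blk prednK // lognM ?expn_gt0 // lognX logn_prime // eqxx muln1.
by rewrite logn_coprime ?addn0 // coprime2n /= odd_double.
Qed.

Lemma blk_infinite k : infinite_set [set i | blk i = k].
Proof. by apply/infiniteP_nat => N; have [i Ni bi] := blk_inf k N; exists i. Qed.

Lemma infinite_gt (D : set nat) m : infinite_set D -> exists2 n, m < n & D n.
Proof. by move=> /infiniteP_nat /(_ m.+1) [n mn Dn]; exists n. Qed.

Section Examples.
Variables (R : realType) (X : metricType R) (eta : X) (y : nat -> X).
Hypothesis P1 : forall U, nbhs eta U -> exists N, forall j, N <= j -> U (y j).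
Hypothesis P3 : forall k, exists V, nbhs eta V /\ forall j, V (y j) -> k < j.

Lemma eta_closure (L : set X) : (forall k, L (y k.+1)) -> closure L eta.
Proof.
move=> Ly B nB; have [N HN] := P1 nB; exists (y N.+1); split; first exact: Ly.
by apply: HN; apply: leqnSn.
Qed.

Lemma not_closed_neq {Psi} (rho : set nat -> set Psi) (x : Psi -> X) :
  ~ Lambda_set rho x eta -> Gamma_set rho x eta -> (forall k, Lambda_set rho x (y k.+1)) ->
  Lambda_set rho x <> Gamma_set rho x /\ ~ closed (Lambda_set rho x).
Proof.
move=> nL G L; split; first by move=> e; apply: nL; rewrite e.
by move=> cl; apply: nL; apply: cl; apply: eta_closure.
Qed.

Definition xr (s : pair2) : X :=
  if blk (val s).1 == blk (val s).2 then y (blk (val s).1).+1 else y 0.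

Lemma xr_props : [/\ ~ Lambda_set rr xr eta, Gamma_set rr xr eta &
   forall k, Lambda_set rr xr (y k.+1)].
Proof.
split.
- move=> [F [Finf HF]].
  have [V0 [nV0 HV0]] := P3 0; have [K0 [fK0 sK0]] := HF V0 nV0.
  have same : forall m n (h : m < n), (F `\` K0) m -> (F `\` K0) n ->
      blk m = blk n /\ V0 (y (blk m).+1).
    move=> m n h Dm Dn; have := sK0 (exist _ (m, n) h) (conj Dm Dn).
    rewrite /xr /=; case: eqP => // _ /HV0; by rewrite ltnn.
  have D0inf : infinite_set (F `\` K0) by apply: infinite_setD.
  have [m Dm] := infinite_setN0 D0inf.
  have [V1 [nV1 HV1]] := P3 (blk m).+1; have [K1 [fK1 sK1]] := HF V1 nV1.
  have D1inf : infinite_set (F `\` (K0 `|` K1)) by apply: infinite_setD => //; rewrite finite_setU.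
  have [m' mm' [Fm' nK']] := infinite_gt m D1inf.
  have [n' mn' [Fn' nKn']] := infinite_gt m' D1inf.
  have Dm' : (F `\` K0) m' by split => // ?; apply: nK'; left.
  have Dn' : (F `\` K0) n' by split => // ?; apply: nKn'; left.
  have [e1 _] := same _ _ mm' Dm Dm'.
  have [e2 _] := same _ _ mn' Dm' Dn'.
  have := sK1 (exist _ (m', n') mn') (conj (conj Fm' (fun h => nK' (or_intror h)))
    (conj Fn' (fun h => nKn' (or_intror h)))).
  by rewrite /xr /= -e2 eqxx -e1 => /HV1; rewrite ltnn.
- move=> U nU; have [N HN] := P1 nU.
  exists [set i | blk i = N]; split; first exact: blk_infinite.
  move=> [[m n] /= h] [/= bm bn]; rewrite /xr /= bm bn eqxx /=.
  by apply: HN; apply: leqnSn.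
- move=> k; exists [set i | blk i = k]; split; first exact: blk_infinite.
  move=> V nV; exists set0; split; first exact: finite_set0.
  rewrite setD0; move=> [[m n] /= h] [/= bm bn]; rewrite /xr /= bm bn eqxx /=.
  exact: nbhs_singleton.
Qed.
End Examples.

Lemma expn_pow i : 2 ^ i = Nat.pow 2 i.
Proof. by elim: i => [|i IH] //; rewrite expnS IH Nat.pow_succ_r' multE. Qed.

Lemma bits_small n i : Nat.testbit n i -> i < n.
Proof.
move=> H; rewrite ltnNge; apply/negP => ni.
case: n H ni => [|n] H ni; first by rewrite Nat.bits_0 in H.
have h1 : (Nat.log2 n.+1 < n.+1)%coq_nat := Nat.log2_lt_lin _ (Nat.lt_0_succ n).
move/ltP: h1 => h1.
by rewrite Nat.bits_above_log2 in H => //; apply/ltP; exact: leq_trans h1 ni.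
Qed.

Lemma bit_pos n : 0 < n -> Nat.testbit n (Nat.log2 n).
Proof. by case: n => // n _; apply: Nat.bit_log2. Qed.

Definition inC b n := 0 < n /\ forall i, Nat.testbit n i -> blk i = b.
Definition clf n :=
  if (0 < n) && all (fun i => Nat.testbit n i ==> (blk i == blk (Nat.log2 n))) (iota 0 n)
  then (blk (Nat.log2 n)).+1 else 0.

Lemma clfP b n : inC b n -> clf n = b.+1.
Proof.
move=> [n0 H]; have Hl := H _ (bit_pos n0); rewrite /clf n0 /=.
have -> : all (fun i => Nat.testbit n i ==> (blk i == blk (Nat.log2 n))) (iota 0 n).
  by apply/allP => i _; apply/implyP => bi; rewrite (H _ bi) Hl.
by rewrite Hl.
Qed.

Lemma clfP' c n : clf n = c.+1 -> inC c n.
Proof.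
rewrite /clf; case: ifP => // /andP [n0 /allP Hall] [<-]; split => // i bi.
apply/eqP; have := Hall i; rewrite mem_iota add0n (bits_small bi) /=.
by move=> /(_ isT) /implyP; apply.
Qed.

Lemma bits_add a b : (forall i, ~~ (Nat.testbit a i && Nat.testbit b i)) ->
  forall j, Nat.testbit (a + b) j = Nat.testbit a j || Nat.testbit b j.
Proof.
move=> H j.
have l0 : Nat.land a b = 0.
  by apply: Nat.bits_inj_0 => i; rewrite Nat.land_spec; apply/negbTE/H.
rewrite -plusE Nat.add_nocarry_lxor // Nat.lxor_spec; have := H j.
by case: (Nat.testbit a j); case: (Nat.testbit b j).
Qed.

Lemma testbit_pow i k : Nat.testbit (2 ^ i) k = (i == k).
Proof. by rewrite expn_pow Nat.pow2_bits_eqb; case: (Nat.eqb_spec i k); case: eqP. Qed.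

Lemma bits_sum s : uniq s -> (forall e, e \in s -> exists i, e = 2 ^ i) ->
  forall j, Nat.testbit (\sum_(e <- s) e) j = (2 ^ j \in s).
Proof.
elim: s => [|e s IH] /= us Hp j; first by rewrite big_nil Nat.bits_0.
move: us => /andP [es us]; have [i ei] := Hp e (mem_head _ _).
have Hp' : forall e', e' \in s -> exists i, e' = 2 ^ i.
  by move=> e' e's; apply: Hp; rewrite inE e's orbT.
rewrite big_cons bits_add; last first.
  move=> k; rewrite IH // ei testbit_pow; case: eqP => [<-|] //=.
  by rewrite -ei (negbTE es).
by rewrite in_cons IH // ei testbit_pow eqn_exp2l // eq_sym.
Qed.

Definition Fk k := [set e | exists2 i, blk i = k & e = 2 ^ i].

Lemma Fk_inC k n : FS (Fk k) n -> inC k n.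
Proof.
move=> [s [us s0 sF ->]].
have Hp : forall e, e \in s -> exists i, e = 2 ^ i by move=> e /sF [i _ ->]; exists i.
split.
  case: s s0 us sF Hp => // e s _ _ sF _; have [i _ ->] := sF e (mem_head _ _).
  by rewrite big_cons addn_gt0 expn_gt0.
move=> j; rewrite bits_sum // => /sF [i bi ei].
by rewrite (expnI (isT : 1 < 2) ei).
Qed.

Lemma Fk_inf k : infinite_set (Fk k).
Proof.
apply/infiniteP_nat => N; have [i Ni bi] := blk_inf k N.
exists (2 ^ i); last by exists i.
by apply: leq_trans Ni (ltnW (ltn_expl _ _)).
Qed.

Lemma mixed b c a d : inC b a -> inC c d -> b != c -> forall e, ~ inC e (a + d).
Proof.
move=> [a0 Ha] [d0 Hd] bc e [_ He].
have disj : forall i, ~~ (Nat.testbit a i && Nat.testbit d i).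
  move=> i; apply/negP => /andP [ta td]; move: bc; by rewrite -(Ha _ ta) -(Hd _ td) eqxx.
have ea := He (Nat.log2 a); rewrite bits_add // bit_pos //= in ea.
have ed := He (Nat.log2 d); rewrite bits_add // (bit_pos d0) orbT in ed.
move: bc; rewrite -(Ha _ (bit_pos a0)) -(Hd _ (bit_pos d0)).
by rewrite (ea isT) (ed isT) eqxx.
Qed.

Section ExamplesFS.
Variables (R : realType) (X : metricType R) (eta : X) (y : nat -> X).
Hypothesis P1 : forall U, nbhs eta U -> exists N, forall j, N <= j -> U (y j).
Hypothesis P3 : forall k, exists V, nbhs eta V /\ forall j, V (y j) -> k < j.

Definition xf (n : nat) : X := y (clf n).

Lemma xf_props : [/\ ~ Lambda_set FS xf eta, Gamma_set FS xf eta &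
   forall k, Lambda_set FS xf (y k.+1)].
Proof.
split.
- move=> [F [Finf HF]].
  have [V0 [nV0 HV0]] := P3 0; have [K0 [fK0 sK0]] := HF V0 nV0.
  have classify : forall n, FS (F `\` K0) n -> exists c, inC c n /\ clf n = c.+1.
    move=> n /sK0; rewrite /xf /=; case E: (clf n) => [|c]; first by move=> /HV0.
    by move=> _; exists c; split => //; apply: clfP'.
  have D0inf : infinite_set (F `\` K0) by apply: infinite_setD.
  have [a Da] := infinite_setN0 D0inf.
  have [c [ca _]] := classify a (FS1 Da).
  have [V1 [nV1 HV1]] := P3 c.+1; have [K1 [fK1 sK1]] := HF V1 nV1.
  have D1inf : infinite_set (F `\` (K0 `|` K1 `|` [set a])).
    by apply: infinite_setD => //; rewrite !finite_setU; split; [split|exact: finite_set1].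
  have [d [Fd nKd]] := infinite_setN0 D1inf.
  have Dd : (F `\` K0) d by split => // ?; apply: nKd; left; left.
  have [c' [cd cde]] := classify d (FS1 Dd).
  have := sK1 d (FS1 (conj Fd (fun h => nKd (or_introl (or_intror h))))).
  rewrite /xf /= cde => /HV1; rewrite ltnS => cc'.
  have ad : a != d by apply/eqP => ad; apply: nKd; right.
  have [e [eC _]] : exists e, inC e (a + d) /\ clf (a + d) = e.+1.
    apply: classify; exists [:: a; d]; split => //.
    + by rewrite /= inE ad.
    + by move=> i; rewrite !inE => /orP [/eqP ->|/eqP ->].
    + by rewrite big_cons big_seq1.
  apply: (mixed ca cd _ eC); rewrite neq_ltn cc' //.
- move=> U nU; have [N HN] := P1 nU.
  exists (Fk N); split; first exact: Fk_inf.
  move=> n /Fk_inC /clfP; rewrite /= /xf => ->.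
  by apply: HN; apply: leqnSn.
- move=> k; exists (Fk k); split; first exact: Fk_inf.
  move=> V nV; exists set0; split; first exact: finite_set0.
  rewrite setD0 => n /Fk_inC /clfP; rewrite /= /xf => ->.
  exact: nbhs_singleton.
Qed.
End ExamplesFS.

Theorem corollary3p4 (R : realType) (X : metricType R)
  (hacc : exists eta : X, limit_point [set: X] eta) :
  [/\ (exists x : pair2 -> X, Lambda_set rr x <> Gamma_set rr x),
      (exists x : pair2 -> X, ~ closed (Lambda_set rr x)) &
      locally_compact [set: X] ->
        forall (x : pair2 -> X) (eta : X),
          isolated_point (Gamma_set rr x) eta -> Lambda_set rr x eta] /\
  [/\ (exists x : nat -> X, Lambda_set FS x <> Gamma_set FS x),
      (exists x : nat -> X, ~ closed (Lambda_set FS x)) &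
      locally_compact [set: X] ->
        forall (x : nat -> X) (eta : X),
          isolated_point (Gamma_set FS x) eta -> Lambda_set FS x eta].
Proof.
have [eta heta] := hacc.
have [y [P1 P3]] := seq_exists heta.
have [nLr Gr Lr] := xr_props P1 P3.
have [neqr nclr] := not_closed_neq P1 nLr Gr Lr.
have [nLf Gf Lf] := xf_props P1 P3.
have [neqf nclf] := not_closed_neq P1 nLf Gf Lf.
split; split.
- by eexists; exact: neqr.
- by eexists; exact: nclr.
- by move=> lc; apply: iso_Lambda RP_rr lc.
- by eexists; exact: neqf.
- by eexists; exact: nclf.
- by move=> lc; apply: iso_Lambda RP_FS lc.
Qed.
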